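(* Let $S^1_\infty=\mathbb{R}\cup\{\infty\}$ with the projective action of $\mathrm{PSL}(2,\mathbb{R})$, and let $x\partial_x$ denote the smooth vector field on $S^1_\infty$ extending $x\partial_x\in\mathfrak{X}(\mathbb{R})$. If $Z\in\mathfrak{X}(S^1_\infty)$ is invariant by some hyperbolic element whose fixed point set is $\{0,\infty\}$, then $Z=\varkappa\,x\partial_x$ for some $\varkappa\in\mathbb{R}$. In particular, if $H\subset\mathrm{PSL}(2,\mathbb{R})$ is a subgroup containing at least one hyperbolic element, and consisting of the identity, hyperbolic elements with fixed point set $\{0,\infty\}$ and possibly elliptic elements leaving $\{0,\infty\}$ invariant, then the space $\mathfrak{X}(S^1_\infty,H)$ of $H$-invariant vector fields equals $\mathbb{R}\,x\partial_x$ if $H$ has no elliptic element, and equals $0$ otherwise.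
   Context: An element of $\mathrm{PSL}(2,\mathbb{R})$, acting on $S^1_\infty$ by $x\mapsto(ax+b)/(cx+d)$, is hyperbolic if it has exactly two fixed points in $S^1_\infty$, and elliptic if it has none. *)

(* Defs.v *)
From Stdlib Require Import Reals.
From Coquelicot Require Import Coquelicot.
Open Scope R_scope.

(** Points of S^1_infty = R ∪ {∞}: [Some x] is the real point x, [None] is ∞. *)
Definition S1inf := option R.

(** Elements of PSL(2,R) are represented by matrices (a,b,c,d) with ad-bc = 1
    (the sign ambiguity is irrelevant for the action). *)
Definition mat := (R * R * R * R)%type.
Definition det1 (m : mat) : Prop :=
  let '(a, b, c, d) := m in a * d - b * c = 1.
Definition mat_id : mat := (1, 0, 0, 1).
Definition mat_mul (m n : mat) : mat :=
  let '(a, b, c, d) := m in let '(a', b', c', d') := n in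
  (a * a' + b * c', a * b' + b * d', c * a' + d * c', c * b' + d * d').
Definition mat_inv (m : mat) : mat :=
  let '(a, b, c, d) := m in (d, - b, - c, a).

Definition act (m : mat) (p : S1inf) : S1inf :=
  let '(a, b, c, d) := m in
  match p with
  | Some x => if Req_EM_T (c * x + d) 0 then None
              else Some ((a * x + b) / (c * x + d))
  | None => if Req_EM_T c 0 then None else Some (a / c)
  end.

Definition fixed (m : mat) (p : S1inf) : Prop := act m p = p.

Definition hyperbolic (m : mat) : Prop :=
  exists p q : S1inf, p <> q /\ forall r, fixed m r <-> (r = p \/ r = q).
Definition elliptic (m : mat) : Prop := forall p, ~ fixed m p.

(** A vector field Z on S^1_infty is given by its expressions in the two
    standard charts: Z = fx(x) ∂_x on the chart x ∈ R, and Z = fy(y) ∂_y on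
    the chart y = 1/x around ∞.  Z is smooth iff fx, fy are C^∞ on R and they
    agree on the overlap: since ∂_x = -y^2 ∂_y there,
    fy(y) = - y^2 fx(1/y) for y <> 0. *)
Definition smooth (f : R -> R) : Prop := forall (n : nat) (x : R), ex_derive_n f n x.

Definition is_vf (fx fy : R -> R) : Prop :=
  smooth fx /\ smooth fy /\ forall y, y <> 0 -> fy y = - (y ^ 2 * fx (/ y)).

(** Invariance of Z under m : phi_* Z = Z, i.e. Z(phi p) = dphi_p (Z p) for
    every point p, written in the charts (derivatives of the chart
    expressions of phi computed using ad - bc = 1):
    - p = x finite, phi p finite (cx+d<>0): x' = (ax+b)/(cx+d), dx'/dx = 1/(cx+d)^2;
    - p = x finite, phi p = ∞ (cx+d=0): y' = (cx+d)/(ax+b), dy'/dx = -1/(ax+b)^2;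
    - p = ∞, c <> 0: x' = (a+by)/(c+dy), dx'/dy at y=0 is -1/c^2;
    - p = ∞, c = 0: y' = dy/(a+by), dy'/dy at y=0 is d/a = d^2. *)
Definition vf_invariant (m : mat) (fx fy : R -> R) : Prop :=
  let '(a, b, c, d) := m in
  (forall x, c * x + d <> 0 ->
     fx ((a * x + b) / (c * x + d)) = fx x / (c * x + d) ^ 2) /\
  (forall x, c * x + d = 0 -> fy 0 = - (fx x / (a * x + b) ^ 2)) /\
  (c <> 0 -> fx (a / c) = - (fy 0 / c ^ 2)) /\
  (c = 0 -> fy 0 = d ^ 2 * fy 0).

(** Subgroups of PSL(2,R), given by (a subgroup of) their matrix lifts. *)
Definition subgroup (H : mat -> Prop) : Prop :=
  (forall m, H m -> det1 m) /\ H mat_id /\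
  (forall m n, H m -> H n -> H (mat_mul m n)) /\
  (forall m, H m -> H (mat_inv m)).

(** The identity of PSL(2,R) = matrices acting trivially (±I). *)
Definition is_identity (m : mat) : Prop := forall p, act m p = p.

Definition zero_inf (p : S1inf) : Prop := p = Some 0 \/ p = None.

(* Main.v *)
Require Import Defs.
From Stdlib Require Import Reals Lra FunctionalExtensionality.
From Coquelicot Require Import Coquelicot.
Open Scope R_scope.

Lemma affine_Dn u v n : exists u' v', Derive_n (fun x => u*x+v) n = (fun x => u'*x+v').
Proof.
  induction n as [|n [u' [v' IH]]].
  - exists u, v; reflexivity.
  - exists 0, u'. apply functional_extensionality; intro x. simpl. rewrite IH.
    replace (0*x+u') with u' by ring.
    apply is_derive_unique. auto_derive; auto; ring.
Qed.

Lemma smooth_affine f u v : (forall x, f x = u*x+v) -> smooth f.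
Proof.
  intros Hf. replace f with (fun x => u*x+v) by (apply functional_extensionality; intro; rewrite Hf; auto).
  intros [|n] x; simpl; auto.
  destruct (affine_Dn u v n) as [u' [v' E]]; rewrite E. auto_derive; auto.
Qed.

Lemma scale_lin (f : R->R) (mu l : R) : 0 < mu < 1 -> (forall x, f (mu*x) = mu * f x) ->
  derivable_pt_lim f 0 l -> forall x, f x = l * x.
Proof.
  intros Hmu Hs Hd.
  assert (f0 : f 0 = 0).
  { assert (E := Hs 0). replace (mu*0) with 0 in E by ring. nra. }
  assert (It : forall n x, f (mu^n * x) = mu^n * f x).
  { induction n; intro x; simpl. rewrite Rmult_1_l; ring.
    rewrite Rmult_assoc, Hs, IHn; ring. }
  intro x. destruct (Req_dec x 0) as [->|Hx]. rewrite f0; ring.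
  destruct (Req_dec (Rabs (f x / x - l)) 0) as [E|E].
  - assert (f x / x - l = 0) by (apply Rabs_eq_0; auto).
    assert (f x = (f x / x) * x) by (field; auto). nra.
  - exfalso. assert (Hpos : 0 < Rabs (f x / x - l)) by (pose proof (Rabs_pos (f x / x - l)); lra).
    destruct (Hd _ Hpos) as [delta Hdel].
    assert (Hax : 0 < Rabs x) by (apply Rabs_pos_lt; auto).
    assert (Rabs mu < 1) by (rewrite Rabs_pos_eq; lra).
    destruct (pow_lt_1_zero mu H (delta / Rabs x)) as [N HN].
    { apply Rdiv_lt_0_compat; auto. apply cond_pos. }
    specialize (HN N (le_n _)).
    assert (Hmn : mu ^ N <> 0) by (apply pow_nonzero; lra).
    assert (Hh : mu^N * x <> 0) by (apply Rmult_integral_contrapositive; auto).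
    assert (Hlt : Rabs (mu^N * x) < delta).
    { rewrite Rabs_mult. apply Rmult_lt_compat_r with (r := Rabs x) in HN; auto.
      replace (delta / Rabs x * Rabs x) with (pos delta) in HN by (field; lra). lra. }
    specialize (Hdel _ Hh Hlt).
    rewrite Rplus_0_l, It, f0 in Hdel.
    replace ((mu ^ N * f x - 0) / (mu ^ N * x)) with (f x / x) in Hdel by (field; auto).
    lra.
Qed.

Lemma lin_of_scale (f : R -> R) (lam : R) : 0 < lam -> lam <> 1 -> (forall x, f (lam*x) = lam * f x) ->
  smooth f -> exists k, forall x, f x = k * x.
Proof.
  intros Hl Hl1 Hs Hsm.
  assert (Hd : ex_derive f 0) by exact (Hsm 1%nat 0).
  destruct Hd as [l Hd]. apply is_derive_Reals in Hd. exists l.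
  destruct (Rlt_dec lam 1).
  - apply (scale_lin f lam); auto; lra.
  - apply (scale_lin f (/lam)); auto.
    + assert (1 < lam) by lra. split. apply Rinv_0_lt_compat; lra.
      rewrite <- Rinv_1. apply Rinv_lt_contravar; lra.
    + intro x. assert (E := Hs (/lam * x)). replace (lam * (/lam * x)) with x in E by (field; lra).
      rewrite E. field. lra.
Qed.

Lemma diag_of_fix a b c d : act (a,b,c,d) None = None -> act (a,b,c,d) (Some 0) = Some 0 ->
  b = 0 /\ c = 0 /\ d <> 0.
Proof.
  simpl. destruct (Req_EM_T c 0); [|discriminate]. intros _.
  destruct (Req_EM_T (c*0+d) 0); [discriminate|]. intro E; injection E; intro E'.
  assert (d <> 0) by (intro; apply n; subst; ring).
  replace (c*0+d) with d in E' by ring. replace (a*0+b) with b in E' by ring.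
  split; auto. assert (b = b / d * d) by (field; auto). nra.
Qed.

Lemma part1 m fx fy : det1 m -> (forall p, fixed m p <-> zero_inf p) ->
     is_vf fx fy -> vf_invariant m fx fy ->
     exists k : R, (forall x, fx x = k * x) /\ (forall y, fy y = - (k * y)).
Proof.
  destruct m as [[[a b] c] d]. intros Hdet Hfix [Sx [Sy Hxy]] Hinv.
  destruct (diag_of_fix a b c d) as [-> [-> Hd]].
  apply Hfix; right; auto. apply Hfix; left; auto.
  simpl in Hdet, Hinv. destruct Hinv as [H1 [_ [_ H4]]].
  assert (Had : a <> d).
  { intro E; subst d. assert (F : fixed (a,0,0,a) (Some 1)).
    { unfold fixed; simpl. destruct (Req_EM_T (0*1+a) 0). exfalso; lra.
      f_equal. field. lra. }
    apply Hfix in F. destruct F as [F|F]; inversion F. lra. }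
  destruct (lin_of_scale fx (a*a)) as [k Hk]; auto.
  - assert (a <> 0) by (intro; subst; lra). nra.
  - intro E. apply Had. assert (d = a * (a*d)) by nra. nra.
  - intro x. specialize (H1 x). replace (0*x+d) with d in H1 by ring.
    assert (Ha : a <> 0) by (intro; subst; lra).
    assert (Hda : d = / a) by (apply Rmult_eq_reg_l with a; auto; rewrite Rinv_r; lra).
    replace ((a*x+0)/d) with (a*a*x) in H1 by (rewrite Hda; field; auto).
    rewrite H1 by auto. rewrite Hda. field. auto.
  - exists k; split; auto. intro y. destruct (Req_dec y 0) as [->|Hy].
    + assert (d^2 <> 1). { intro E. apply Had. assert (d = 1 \/ d = -1) by nra. destruct H; subst; lra. }
      specialize (H4 eq_refl). assert (Hf0 : fy 0 = 0) by nra. rewrite Hf0; ring.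
    + rewrite Hxy, Hk by auto. field. auto.
Qed.

Lemma id_not_hyp h : is_identity h -> hyperbolic h -> False.
Proof.
  intros Hid [p [q [Hpq Hr]]].
  assert (H0 := proj1 (Hr (Some 0)) (Hid _)).
  assert (H1 := proj1 (Hr (Some 1)) (Hid _)).
  assert (H2 := proj1 (Hr (Some 2)) (Hid _)).
  destruct H0, H1, H2; subst;
  repeat (match goal with H : Some _ = Some _ |- _ => injection H; clear H; intro end); lra.
Qed.

Lemma get_hyp H : (exists h, H h /\ hyperbolic h) ->
     (forall h, H h ->
        is_identity h
        \/ (hyperbolic h /\ forall p, fixed h p <-> zero_inf p)
        \/ (elliptic h /\ forall p, zero_inf p -> zero_inf (act h p))) ->
  exists h, H h /\ forall p, fixed h p <-> zero_inf p.
Proof.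
  intros [h [Hh Hhyp]] Htri. exists h; split; auto.
  destruct (Htri h Hh) as [Hi|[[_ Hf]|[He _]]]; auto.
  - exfalso; eapply id_not_hyp; eauto.
  - exfalso. destruct Hhyp as [p [q [_ Hr]]]. apply (He p). apply Hr. auto.
Qed.

Lemma inv_lin a b c d k : det1 (a,b,c,d) -> act (a,b,c,d) None = None -> act (a,b,c,d) (Some 0) = Some 0 ->
  vf_invariant (a,b,c,d) (fun x => k*x) (fun y => -(k*y)).
Proof.
  intros Hdet HN H0. destruct (diag_of_fix a b c d HN H0) as [-> [-> Hd]].
  simpl in *. split; [|split; [|split]].
  - intros x _. replace (0*x+d) with d by ring.
    assert (Ha : a <> 0) by (intro; subst; lra).
    assert (Hda : d = / a) by (apply Rmult_eq_reg_l with a; auto; rewrite Rinv_r; lra).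
    rewrite Hda. field. auto.
  - intros x E. exfalso. apply Hd. lra.
  - intro E; exfalso; auto.
  - intros _. ring.
Qed.

Lemma inv_ext m fx fy gx gy : (forall x, fx x = gx x) -> (forall y, fy y = gy y) ->
  vf_invariant m gx gy -> vf_invariant m fx fy.
Proof.
  intros Ex Ey. replace fx with gx by (apply functional_extensionality; intro; auto).
  replace fy with gy by (apply functional_extensionality; intro; auto). auto.
Qed.

Theorem lemma3p15 :
  (forall (m : mat) (fx fy : R -> R),
     det1 m -> hyperbolic m -> (forall p, fixed m p <-> zero_inf p) ->
     is_vf fx fy -> vf_invariant m fx fy ->
     exists k : R, (forall x, fx x = k * x) /\ (forall y, fy y = - (k * y)))
  /\
  (forall H : mat -> Prop,
     subgroup H ->
     (exists h, H h /\ hyperbolic h) ->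
     (forall h, H h ->
        is_identity h
        \/ (hyperbolic h /\ forall p, fixed h p <-> zero_inf p)
        \/ (elliptic h /\ forall p, zero_inf p -> zero_inf (act h p))) ->
     ((~ exists h, H h /\ elliptic h) ->
        forall fx fy : R -> R,
          (is_vf fx fy /\ forall h, H h -> vf_invariant h fx fy) <->
          exists k : R, (forall x, fx x = k * x) /\ (forall y, fy y = - (k * y)))
     /\
     ((exists h, H h /\ elliptic h) ->
        forall fx fy : R -> R,
          (is_vf fx fy /\ forall h, H h -> vf_invariant h fx fy) <->
          ((forall x, fx x = 0) /\ (forall y, fy y = 0)))).
Proof.
  split.
  { intros m fx fy Hd _ Hf Hv Hi. eapply part1; eauto. }
  intros H [Hdet [_ _]] Hex Htri.
  destruct (get_hyp H Hex Htri) as [h0 [Hh0 Hf0]].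
  split.
  - intros Hne fx fy. split.
    + intros [Hv Hi]. eapply part1; eauto.
    + intros [k [Hx Hy]]. split.
      * split; [|split].
        -- apply (smooth_affine fx k 0). intro; rewrite Hx; ring.
        -- apply (smooth_affine fy (-k) 0). intro; rewrite Hy; ring.
        -- intros y Hy0. rewrite Hy, Hx. field. auto.
      * intros h Hh. apply (inv_ext h fx fy (fun x => k*x) (fun y => -(k*y))); auto.
        destruct h as [[[a b] c] d].
        destruct (Htri _ Hh) as [Hi|[[_ Hf]|[He _]]].
        -- apply inv_lin; auto.
        -- apply inv_lin; auto. apply Hf; right; auto. apply Hf; left; auto.
        -- exfalso; apply Hne; eauto.
  - intros [e [He Hell]] fx fy. split.
    + intros [Hv Hi].
      destruct (part1 h0 fx fy (Hdet _ Hh0) Hf0 Hv (Hi _ Hh0)) as [k [Hx Hy]].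
      assert (Hk : k = 0).
      { destruct (Htri e He) as [Hid|[[Hhyp _]|[_ Hz]]].
        - exfalso. apply (Hell (Some 0)). apply Hid.
        - exfalso. destruct Hhyp as [p [q [_ Hr]]]. apply (Hell p). apply Hr. auto.
        - assert (Z0 := Hz (Some 0) (or_introl eq_refl)).
          assert (ZN := Hz None (or_intror eq_refl)).
          assert (De := Hdet _ He). assert (Ie := Hi _ He).
          destruct e as [[[a b] c] d]. simpl in De, Ie.
          destruct Z0 as [Z0|Z0]. { exfalso; apply (Hell (Some 0)); exact Z0. }
          destruct ZN as [ZN|ZN]; [|exfalso; apply (Hell None); exact ZN].
          simpl in Z0, ZN.
          destruct (Req_EM_T (c*0+d) 0) as [Ed|]; [|discriminate].
          destruct (Req_EM_T c 0) as [|Hc]; [discriminate|].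
          injection ZN; intro Ea.
          assert (Hd0 : d = 0) by lra.
          assert (Ha0 : a = 0) by (assert (a = a / c * c) by (field; auto); nra).
          subst a d.
          destruct Ie as [I1 _]. specialize (I1 1).
          replace (c*1+0) with c in I1 by ring. specialize (I1 Hc).
          rewrite !Hx in I1.
          replace (0*1+b) with b in I1 by ring.
          assert (E2 : k * (b / c) * c^2 = k * 1 / c^2 * c^2) by (rewrite I1; auto).
          replace (k * (b / c) * c^2) with (k*(b*c)) in E2 by (field; auto).
          replace (k * 1 / c^2 * c^2) with k in E2 by (field; auto).
          nra. }
      subst k. split; intro; [rewrite Hx|rewrite Hy]; ring.
    + intros [Hx Hy]. split.
      * split; [|split].
        -- apply (smooth_affine fx 0 0). intro; rewrite Hx; ring.
        -- apply (smooth_affine fy 0 0). intro; rewrite Hy; ring.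
        -- intros y _. rewrite Hy, Hx. ring.
      * intros h Hh. destruct h as [[[a b] c] d]. simpl.
        repeat split; intros; rewrite ?Hx, ?Hy; unfold Rdiv; ring.
Qed.
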